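(* Let $V$ be a finite set with $K = |V| \geq 1$ elements, let $\epsilon \geq 0$, and let $f : 2^V \to \mathbb{R}_{\geq 0}$. Then the $\epsilon$-pruning $\tilde f$ of $f$ is $\epsilon$-close to $f$; that is, for all $T, U \subseteq V$ with $|T| \leq 1$, $$(1-\epsilon)\, f[T,U] \;\leq\; \tilde f[T,U] \;\leq\; f[T,U].$$
   Context: For $g : 2^V \to \mathbb{R}_{\geq 0}$ and $T, U \subseteq V$, the interval sum is $g[T,U] := \sum_{S:\, T \subseteq S \subseteq U} g(S)$ (an empty sum, equal to $0$, if $T \not\subseteq U$). A function $\tilde f : 2^V \to \mathbb{R}_{\geq 0}$ is called $\epsilon$-close to $f$ if $(1-\epsilon) f[T,U] \leq \tilde f[T,U] \leq f[T,U]$ for all $T,U \subseteq V$ with $|T| \leq 1$. For $j \in S \subseteq V$ define $$\psi(j,S) = \sum_{R:\, j \in R \subseteq S} f(R)\,\bigl(1 + 1/K\bigr)^{|R|-K}\, K^{|R|-|S|}.$$ The $\epsilon$-pruning of $f$ is the function $\tilde f : 2^V \to \mathbb{R}_{\geq 0}$ given by $\tilde f(S) = 0$ if $S \neq \emptyset$ and $f(S) < \epsilon \cdot \psi(j,S)$ for every $j \in S$, and $\tilde f(S) = f(S)$ otherwise (in particular $\tilde f(\emptyset) = f(\emptyset)$). *)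

(* Defs.v *)
From mathcomp Require Import all_boot all_order all_algebra.
Set Implicit Arguments. Unset Strict Implicit. Unset Printing Implicit Defensive.
Import Order.TTheory GRing.Theory Num.Theory.
Local Open Scope ring_scope.

Section Defs.
Variables (R : realFieldType) (V : finType).

(* interval sum g[T,U] = sum over S with T ⊆ S ⊆ U of g S (0 if T ⊄ U) *)
Definition isum (g : {set V} -> R) (T U : {set V}) : R :=
  \sum_(S : {set V} | (T \subset S) && (S \subset U)) g S.

Definition eps_close (eps : R) (f ft : {set V} -> R) : Prop :=
  forall T U : {set V}, (#|T| <= 1)%N ->
    (1 - eps) * isum f T U <= isum ft T U /\ isum ft T U <= isum f T U.

Definition psi (f : {set V} -> R) (j : V) (S : {set V}) : R :=
  let K := #|V| in
  \sum_(Rs : {set V} | (j \in Rs) && (Rs \subset S))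
     f Rs * (1 + (K%:R)^-1) ^ (#|Rs|%:Z - K%:Z) * (K%:R) ^ (#|Rs|%:Z - #|S|%:Z).

Definition pruning (eps : R) (f : {set V} -> R) : {set V} -> R :=
  fun S => if (S != set0) && [forall j in S, f S < eps * psi f j S] then 0 else f S.
End Defs.

(* Main.v *)
Require Import Defs.
From mathcomp Require Import all_boot all_order all_algebra.
Set Implicit Arguments. Unset Strict Implicit. Unset Printing Implicit Defensive.
Import Order.TTheory GRing.Theory Num.Theory.
Local Open Scope ring_scope.

Section Aux.
Variables (R : realFieldType) (V : finType).
Implicit Types (A B S T U W : {set V}).

Lemma split_sum (x : V) W (F : {set V} -> R) : x \notin W ->
  \sum_(A : {set V} | A \subset x |: W) F A =
  \sum_(A : {set V} | A \subset W) F A + \sum_(A : {set V} | A \subset W) F (x |: A).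
Proof.
move=> xW; rewrite (bigID (fun A => x \in A)) /= addrC; congr (_ + _).
  apply: eq_bigl => A; apply/andP/idP => [[sub nx]|sub].
    apply/subsetP => y yA; have := subsetP sub y yA; rewrite !inE.
    by case/orP => [/eqP eq|//]; subst; rewrite yA in nx.
  split; first exact: subset_trans sub (subsetU1 x W).
  by apply/negP => xA; move: xW; rewrite (subsetP sub x xA).
rewrite (reindex_onto (fun A => x |: A) (fun A => A :\ x)); last first.
  by move=> A /andP[_ xA]; rewrite setD1K.
apply: eq_bigl => B; apply/idP/idP.
  case/andP=> /andP[sub _] /eqP <-.
  by rewrite -(setU1K xW); apply: setSD.
move=> sub; have xB : x \notin B by apply/negP => xB; move: xW; rewrite (subsetP sub x xB).
by rewrite setUS // setU11 (setU1K xB) eqxx.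
Qed.

Lemma sum_pow (q : R) W : \sum_(A : {set V} | A \subset W) q ^+ #|A| = (1 + q) ^+ #|W|.
Proof.
move: {2}#|W| (erefl #|W|) => n; elim: n W => [|n IH] W hW.
  rewrite (cards0_eq hW).
  rewrite (eq_bigl (fun A => A == set0)); last by move=> A; rewrite subset0.
  by rewrite big_pred1_eq cards0 expr0.
have : (0 < #|W|)%N by rewrite hW.
case/card_gt0P => x xW.
have xW' : x \notin W :\ x by rewrite !inE eqxx.
have hW2 : #|W :\ x| = n by move: hW; rewrite (cardsD1 x W) xW add1n => -[].
rewrite -(setD1K xW) split_sum // IH //.
rewrite (eq_bigr (fun A => q * q ^+ #|A|)); last first.
  move=> A sub; rewrite cardsU1.
  have -> : x \notin A by apply/negP => xA; move: xW'; rewrite (subsetP sub x xA).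
  by rewrite add1n exprS.
by rewrite -mulr_sumr IH // cardsU1 xW' add1n exprS mulrDl mul1r.
Qed.

Lemma sum_interval (q : R) A U : A \subset U ->
  \sum_(S : {set V} | (A \subset S) && (S \subset U)) q ^+ (#|S| - #|A|) = (1 + q) ^+ (#|U| - #|A|).
Proof.
move=> AU.
rewrite (reindex_onto (fun B => A :|: B) (fun S => S :\: A)); last first.
  move=> S /andP[AS _]; by rewrite setDE setUIr setUCr setIT (setUidPr AS).
have -> : (#|U| - #|A|)%N = #|U :\: A| by rewrite cardsD (setIidPr AU).
rewrite -sum_pow.
apply: eq_big => B.
  apply/idP/idP.
    case/andP=> /andP[_ sub] /eqP <-; exact: setSD.
  rewrite subsetD => /andP[BU dis].
  rewrite subsetUl /= subUset AU BU /= setDUl setDv set0U.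
  by apply/eqP/setDidPl.
case/andP=> /andP[_ _] /eqP hB.
have dis : [disjoint A & B] by rewrite -hB disjoint_sym; apply/setDidPl; rewrite setDDl setUid.
rewrite cardsU.
have -> : A :&: B = set0 by apply/eqP; rewrite setI_eq0.
by rewrite cards0 subn0 addKn.
Qed.

Lemma exch (I J : finType) (P : pred I) (Q : I -> pred J) (P' : pred J)
  (Q' : J -> pred I) (F : I -> J -> R) :
  (forall i j, P i && Q i j = P' j && Q' j i) ->
  \sum_(i | P i) \sum_(j | Q i j) F i j = \sum_(j | P' j) \sum_(i | Q' j i) F i j.
Proof.
move=> h.
transitivity (\sum_i \sum_j (if P i && Q i j then F i j else 0)).
  rewrite big_mkcond; apply: eq_bigr => i _; rewrite big_mkcond /=.
  by case: (P i) => //=; rewrite big1.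
rewrite exchange_big; symmetry; rewrite big_mkcond; apply: eq_bigr => j _.
rewrite big_mkcond /=; case Pj: (P' j) => /=.
  by apply: eq_bigr => i _; rewrite h Pj.
by rewrite big1 // => i _; rewrite h Pj.
Qed.
End Aux.

Theorem theorem1 (R : realFieldType) (V : finType) (hV : (1 <= #|V|)%N)
  (eps : R) (heps : 0 <= eps) (f : {set V} -> R) (hf : forall S, 0 <= f S) :
  eps_close eps f (pruning eps f).
Proof.
pose K := #|V|. pose q : R := (K%:R)^-1. pose b : R := 1 + q.
have Kpos : 0 < K%:R :> R by rewrite ltr0n.
have q0 : 0 <= q by rewrite invr_ge0 ltW.
have b1 : 1 <= b by rewrite lerDl.
have b0 : 0 < b by apply: lt_le_trans b1.
pose w S := f S * b ^ (#|S|%:Z - K%:Z).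
pose Phi (T S : {set V}) := \sum_(Rs : {set V} | (T \subset Rs) && (Rs \subset S))
   w Rs * q ^+ (#|S| - #|Rs|).
have w0 S : 0 <= w S by rewrite mulr_ge0 // exprz_ge0 // ltW.
have Phi0 T S : 0 <= Phi T S by apply: sumr_ge0 => Rs _; rewrite mulr_ge0 // exprn_ge0.
have zpow (x : R) (m n : nat) : (m <= n)%N -> x ^ (m%:Z - n%:Z) = x^-1 ^+ (n - m).
  by move=> le; rewrite -opprB subzn // -exprnN exprVn.
have psiE j S : psi f j S = Phi [set j] S.
  rewrite /psi /Phi; apply: eq_big => [Rs|Rs /andP[_ sub]]; first by rewrite sub1set.
  by rewrite (zpow _ #|Rs| #|S|) ?subset_leq_card.

have KeyL (T U : {set V}) : \sum_(S : {set V} | (T \subset S) && (S \subset U)) Phi T S <= isum f T U.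
  rewrite /Phi /isum (exch (P' := fun Rs : {set V} => (T \subset Rs) && (Rs \subset U))
     (Q' := fun (Rs S : {set V}) => (Rs \subset S) && (S \subset U))); last first.
    move=> S Rs; apply/idP/idP.
      by case/andP => /andP[TS SU] /andP[TR RS]; rewrite TR (subset_trans RS SU) RS SU.
    by case/andP => /andP[TR RU] /andP[RS SU]; rewrite (subset_trans TR RS) SU TR RS.
  apply: ler_sum => Rs /andP[TR RU].
  rewrite -mulr_sumr sum_interval //.
  rewrite /w -mulrA; apply: ler_piMr => //.
  rewrite exprnP -expfzDr; last by rewrite gt_eqF.
  have hU := subset_leq_card RU.
  have hK : (#|U| <= K)%N by apply: max_card.
  rewrite (_ : _ + _ = #|U|%:Z - K%:Z); last by rewrite -subzn // addrC addrA addrNK.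
  rewrite zpow //; apply: exprn_ile1; first by rewrite invr_ge0 ltW.
  by rewrite invf_le1.
move=> T U hT; split; last first.
  rewrite /isum; apply: ler_sum => S _; rewrite /pruning; by case: ifP.
have key : isum f T U - isum (pruning eps f) T U <= eps * isum f T U.
  rewrite /isum -sumrB.
  apply: le_trans (_ : _ <= eps * \sum_(S : {set V} | (T \subset S) && (S \subset U)) Phi T S) _;
    last by apply: ler_wpM2l => //; apply: KeyL.
  rewrite mulr_sumr; apply: ler_sum => S /andP[TS SU].
  rewrite /pruning; case: ifP => [/andP[Sn /forallP hall] | _]; last by rewrite subrr mulr_ge0.
  rewrite subr0.
  have : (#|T| == 0)%N || (#|T| == 1)%N by move: hT; case: #|T| => [|[|]].
  case/orP => [/eqP/cards0_eq T0 | /cards1P [t Tt]]; last first.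
    rewrite Tt -psiE; have tS : t \in S by rewrite -sub1set -Tt.
    by move: (hall t); rewrite tS /= => /ltW.
  rewrite T0.
  have cS : 0 < #|S|%:R :> R by rewrite ltr0n card_gt0.
  rewrite -(ler_pM2l cS).
  apply: le_trans (_ : _ <= eps * \sum_(j in S) Phi [set j] S) _.
    rewrite mulr_natl -sumr_const mulr_sumr; apply: ler_sum => j jS.
    by rewrite -psiE; move: (hall j); rewrite jS /= => /ltW.
  rewrite mulrCA; apply: ler_wpM2l => //.
  rewrite /Phi (exch (P' := fun Rs : {set V} => Rs \subset S) (Q' := fun (Rs : {set V}) (j : V) => j \in Rs)); last first.
    move=> j Rs; rewrite sub1set; apply/idP/idP.
      by case/andP=> jS /andP[jR RS]; rewrite RS jR.
    by case/andP=> RS jR; rewrite (subsetP RS j jR) jR RS.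
  rewrite [X in _ <= _ * X](eq_bigl (fun Rs : {set V} => Rs \subset S)); last first.
    by move=> Rs; rewrite sub0set.
  rewrite mulr_sumr; apply: ler_sum => Rs RS.
  rewrite sumr_const; set x := w Rs * _; rewrite -[X in X <= _]mulr_natl.
  have x0 : 0 <= x by rewrite /x mulr_ge0 // exprn_ge0.
  have h : (#|Rs|%:R : R) <= #|S|%:R by rewrite ler_nat subset_leq_card.
  exact: ler_pM.
move: key; rewrite mulrBl mul1r => key.
rewrite lerBlDr addrC -lerBlDr; exact: key.
Qed.
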